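(* Call a permutation $g$ of the set $\omega$ of natural numbers local if for every $i\in\omega$ there exists $j>i$ in $\omega$ such that $g$ carries $\{0,\ldots,j-1\}$ to itself. Then every permutation $f$ of $\omega$ is a product $gh$ of two local permutations $g,h$. *)

(* Defs.v *)
From Stdlib Require Import Arith.

Definition is_perm (f : nat -> nat) : Prop :=
  (forall x y, f x = f y -> x = y) /\ (forall y, exists x, f x = y).

Definition carries_initial (g : nat -> nat) (j : nat) : Prop :=
  (forall x, x < j -> g x < j) /\ (forall y, y < j -> exists x, x < j /\ g x = y).

Definition local_perm (g : nat -> nat) : Prop :=
  is_perm g /\ forall i, exists j, i < j /\ carries_initial g j.

(* Main.v *)
Require Import Defs.
From Stdlib Require Import Arith Lia IndefiniteDescription.

Fixpoint cnt (P : nat -> bool) (n : nat) : nat :=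
  match n with 0 => 0 | S n => cnt P n + (if P n then 1 else 0) end.

Lemma cnt_le P n : cnt P n <= n.
Proof. induction n; simpl; [lia|destruct (P n); lia]. Qed.

Lemma cnt_mono P x y : x <= y -> cnt P x <= cnt P y.
Proof. induction 1; simpl; [lia|destruct (P m); lia]. Qed.

Lemma cnt_strict P x y : P x = true -> x < y -> cnt P x < cnt P y.
Proof.
  intros Hx Hxy. pose proof (cnt_mono P (S x) y Hxy). simpl in H. rewrite Hx in H. lia.
Qed.

Lemma cnt_compl P n : cnt P n + cnt (fun z => negb (P z)) n = n.
Proof. induction n; simpl; [lia|destruct (P n); simpl; lia]. Qed.

Lemma cnt_ivt P c v : v < cnt P c -> exists x, x < c /\ P x = true /\ cnt P x = v.
Proof.
  induction c; simpl; intros H; [lia|].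
  destruct (Nat.lt_ge_cases v (cnt P c)) as [Hl|Hl].
  - destruct (IHc Hl) as [x [? [? ?]]]. exists x; repeat split; auto.
  - destruct (P c) eqn:E; [|lia]. exists c; repeat split; auto; lia.
Qed.

Lemma cnt_all P a x : (forall z, z < a -> P z = true) -> x <= a -> cnt P x = x.
Proof.
  intros H; induction x; simpl; intros; [lia|]. rewrite H by lia. rewrite IHx by lia. lia.
Qed.

Definition sg (P : nat -> bool) (m x : nat) :=
  if P x then cnt P x else m + cnt (fun z => negb (P z)) x.

Lemma sg_lt P c x : x < c -> sg P (cnt P c) x < c.
Proof.
  intros H; unfold sg. pose proof (cnt_compl P c). pose proof (cnt_le P c).
  destruct (P x) eqn:E.
  - pose proof (cnt_strict P x c E H). lia.
  - assert (negb (P x) = true) by (rewrite E; auto).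
    pose proof (cnt_strict (fun z => negb (P z)) x c H2 H). lia.
Qed.

Lemma sg_P P c x : x < c -> (sg P (cnt P c) x < cnt P c <-> P x = true).
Proof.
  intros H; unfold sg. destruct (P x) eqn:E.
  - pose proof (cnt_strict P x c E H). split; auto.
  - split; intros; [lia|discriminate].
Qed.

Lemma sg_inj P c x y : x < c -> y < c -> sg P (cnt P c) x = sg P (cnt P c) y -> x = y.
Proof.
  intros Hx Hy Heq.
  pose proof (sg_P P c x Hx) as Px. pose proof (sg_P P c y Hy) as Py.
  unfold sg in *.
  destruct (P x) eqn:Ex, (P y) eqn:Ey.
  - destruct (Nat.lt_total x y) as [L|[L|L]]; auto.
    + pose proof (cnt_strict P x y Ex L); lia.
    + pose proof (cnt_strict P y x Ey L); lia.
  - exfalso. pose proof (cnt_strict P x c Ex Hx). lia.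
  - exfalso. pose proof (cnt_strict P y c Ey Hy). lia.
  - assert (Nx : negb (P x) = true) by (rewrite Ex; auto).
    assert (Ny : negb (P y) = true) by (rewrite Ey; auto).
    destruct (Nat.lt_total x y) as [L|[L|L]]; auto.
    + pose proof (cnt_strict (fun z => negb (P z)) x y Nx L); simpl in *; lia.
    + pose proof (cnt_strict (fun z => negb (P z)) y x Ny L); simpl in *; lia.
Qed.

Lemma sg_surj P c y : y < c -> exists x, x < c /\ sg P (cnt P c) x = y.
Proof.
  intros H. unfold sg. pose proof (cnt_compl P c).
  destruct (Nat.lt_ge_cases y (cnt P c)) as [L|L].
  - destruct (cnt_ivt P c y L) as [x [? [E ?]]]. exists x. rewrite E. auto.
  - destruct (cnt_ivt (fun z => negb (P z)) c (y - cnt P c)) as [x [? [E ?]]]; [lia|].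
    exists x. split; auto. destruct (P x); simpl in E; [discriminate|]. lia.
Qed.

Lemma sg_id P m a x : (forall z, z < a -> P z = true) -> x < a -> sg P m x = x.
Proof.
  intros H Hx. unfold sg. rewrite H by auto. apply (cnt_all P a); auto; lia.
Qed.

Lemma sg_ge P c a x : (forall z, z < a -> P z = true) -> a <= x -> x < c ->
  a <= sg P (cnt P c) x.
Proof.
  intros H Ha Hc. destruct (Nat.lt_ge_cases (sg P (cnt P c) x) a) as [L|L]; auto.
  exfalso. pose proof (sg_id P (cnt P c) a _ H L).
  assert (sg P (cnt P c) x = x). { apply (sg_inj P c); auto; lia. }
  lia.
Qed.

Lemma cnt_eq_f (f finv : nat -> nat) (Hff : forall x, finv (f x) = x)
  (Hfi : forall y, f (finv y) = y) b N :
  cnt (fun z => f z =? b) N = if finv b <? N then 1 else 0.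
Proof.
  induction N; simpl.
  - destruct (Nat.ltb_spec (finv b) 0); lia.
  - rewrite IHN. destruct (Nat.eq_dec N (finv b)) as [->|Hn].
    + rewrite Hfi, Nat.eqb_refl. destruct (Nat.ltb_spec (finv b) (finv b)); [lia|].
      destruct (Nat.ltb_spec (finv b) (S (finv b))); lia.
    + destruct (Nat.eqb_spec (f N) b) as [E|E].
      { exfalso. apply Hn. rewrite <- E. auto. }
      destruct (Nat.ltb_spec (finv b) N); destruct (Nat.ltb_spec (finv b) (S N)); lia.
Qed.

Lemma cnt_split_f (f : nat -> nat) b N :
  cnt (fun z => f z <? S b) N = cnt (fun z => f z <? b) N + cnt (fun z => f z =? b) N.
Proof.
  induction N; simpl; auto. rewrite IHN.
  destruct (Nat.ltb_spec (f N) (S b)); destruct (Nat.ltb_spec (f N) b);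
  destruct (Nat.eqb_spec (f N) b); lia.
Qed.

Lemma cnt_f (f finv : nat -> nat) (Hff : forall x, finv (f x) = x)
  (Hfi : forall y, f (finv y) = y) N b :
  (forall y, y < b -> finv y < N) -> cnt (fun z => f z <? b) N = b.
Proof.
  induction b; intros H.
  - clear H. induction N; simpl; auto. rewrite IHN. destruct (Nat.ltb_spec (f N) 0); lia.
  - rewrite cnt_split_f, IHb by (intros; apply H; lia).
    rewrite (cnt_eq_f f finv Hff Hfi). specialize (H b (Nat.lt_succ_diag_r b)).
    destruct (Nat.ltb_spec (finv b) N); lia.
Qed.

Fixpoint bnd (F : nat -> nat) n :=
  match n with 0 => 0 | S n => Nat.max (bnd F n) (S (F n)) end.

Lemma bnd_spec F n x : x < n -> F x < bnd F n.
Proof.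
  induction n; simpl; intros; [lia|].
  destruct (Nat.eq_dec x n) as [->|]; [lia|]. specialize (IHn ltac:(lia)). lia.
Qed.

Lemma a_mono (a : nat -> nat) (Ha : forall n, a n < a (S n)) j k : j <= k -> a j <= a k.
Proof. induction 1; [lia|]. specialize (Ha m). lia. Qed.

Lemma a_strict (a : nat -> nat) (Ha : forall n, a n < a (S n)) j k : j < k -> a j < a k.
Proof. intros H. pose proof (a_mono a Ha (S j) k H). specialize (Ha j). lia. Qed.

Lemma ex_block (a : nat -> nat) (Ha : forall n, a n < a (S n)) (H0 : a 0 = 0) x :
  exists k, a k <= x /\ x < a (S k).
Proof.
  induction x.
  - exists 0. rewrite H0. specialize (Ha 0). lia.
  - destruct IHx as [k [H1 H2]].
    destruct (Nat.lt_ge_cases (S x) (a (S k))).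
    + exists k; lia.
    + exists (S k). specialize (Ha (S k)). lia.
Qed.

Lemma block_uniq (a : nat -> nat) (Ha : forall n, a n < a (S n)) x j k :
  a j <= x < a (S j) -> a k <= x < a (S k) -> j = k.
Proof.
  intros H1 H2. destruct (Nat.lt_total j k) as [L|[L|L]]; auto.
  - pose proof (a_mono a Ha (S j) k L). lia.
  - pose proof (a_mono a Ha (S k) j L). lia.
Qed.

Lemma block_lt (a : nat -> nat) (Ha : forall n, a n < a (S n)) x j k :
  a j <= x < a (S j) -> (x < a k <-> j < k).
Proof.
  intros H1. split; intros H.
  - destruct (Nat.lt_ge_cases j k); auto. pose proof (a_mono a Ha k j H0). lia.
  - pose proof (a_mono a Ha (S j) k H). lia.
Qed.


Fixpoint Aseq (f finv : nat -> nat) k :=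
  match k with
  | 0 => 0
  | S k => let b := Nat.max (S (Aseq f finv k)) (bnd f (Aseq f finv k)) in
           Nat.max (S b) (bnd finv b)
  end.
Definition Bseq (f finv : nat -> nat) k :=
  Nat.max (S (Aseq f finv k)) (bnd f (Aseq f finv k)).

Lemma Aseq_S f finv k :
  Aseq f finv (S k) = Nat.max (S (Bseq f finv k)) (bnd finv (Bseq f finv k)).
Proof. reflexivity. Qed.

Lemma carries_of (p : nat -> nat) j : is_perm p -> (forall x, x < j <-> p x < j) ->
  carries_initial p j.
Proof.
  intros [_ Hs] H. split.
  - intros x Hx. apply (proj1 (H x)); auto.
  - intros y Hy. destruct (Hs y) as [x Hx]. exists x. split; auto. apply (proj2 (H x)). rewrite Hx; auto.
Qed.

Theorem lemma5p1 (f : nat -> nat) (hf : is_perm f) :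
  exists g h : nat -> nat, local_perm g /\ local_perm h /\ forall x, f x = g (h x).
Proof.
  destruct hf as [finj fsurj].
  set (finv := fun y => proj1_sig (constructive_indefinite_description _ (fsurj y))).
  assert (Hfi : forall y, f (finv y) = y).
  { intros y. unfold finv. destruct (constructive_indefinite_description _ _); auto. }
  assert (Hff : forall x, finv (f x) = x) by (intros; apply finj; auto).
  set (A := Aseq f finv). set (B := Bseq f finv).
  assert (HAB : forall k, A k < B k) by (intros; unfold A, B, Bseq; lia).
  assert (HBA : forall k, B k < A (S k)) by (intros; unfold A, B; rewrite Aseq_S; lia).
  assert (HA : forall k, A k < A (S k)) by (intros; pose proof (HAB k); pose proof (HBA k); lia).
  assert (H0 : A 0 = 0) by reflexivity.
  assert (C1 : forall k x, x < A k -> f x < B k).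
  { intros k x Hx. unfold B, Bseq. fold A. pose proof (bnd_spec f (A k) x Hx). lia. }
  assert (C2 : forall k y, y < B k -> finv y < A (S k)).
  { intros k y Hy. unfold A at 1. rewrite Aseq_S. fold B.
    pose proof (bnd_spec finv (B k) y Hy). lia. }
  assert (Hk : forall k, k <= A k).
  { induction k; [lia|]. pose proof (HA k). lia. }
  set (blk := fun x => proj1_sig (constructive_indefinite_description _ (ex_block A HA H0 x))).
  assert (Hblk : forall x, A (blk x) <= x < A (S (blk x))).
  { intros x. unfold blk. destruct (constructive_indefinite_description _ _); simpl; lia. }
  set (P := fun k z => f z <? B k).
  assert (HP : forall k, cnt (P k) (A (S k)) = B k).
  { intros k. apply (cnt_f f finv Hff Hfi). apply C2. }
  assert (HPa : forall k z, z < A k -> P k z = true).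
  { intros k z Hz. unfold P. apply Nat.ltb_lt. auto. }
  set (h := fun x => sg (P (blk x)) (B (blk x)) x).
  assert (Hh : forall x, h x = sg (P (blk x)) (cnt (P (blk x)) (A (S (blk x)))) x).
  { intros x. unfold h. rewrite HP. auto. }
  assert (Hhb : forall x, A (blk x) <= h x < A (S (blk x))).
  { intros x. rewrite Hh. pose proof (Hblk x). split.
    - apply sg_ge; [apply HPa|lia|lia].
    - apply sg_lt; lia. }
  assert (Hbh : forall x, blk (h x) = blk x).
  { intros x. apply (block_uniq A HA (h x)); auto. }
  assert (hperm : is_perm h).
  { split.
    - intros x y E. assert (Eb : blk x = blk y) by (rewrite <- (Hbh x), <- (Hbh y), E; auto).
      rewrite !Hh in E. rewrite <- Eb in E. pose proof (Hblk x) as Bx. pose proof (Hblk y) as By.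
      apply (sg_inj _ _ _ _ (proj2 Bx) ltac:(rewrite Eb; apply By) E).
    - intros y. pose proof (Hblk y) as By. set (k := blk y) in *.
      destruct (sg_surj (P k) (A (S k)) y ltac:(lia)) as [x [Hx E]].
      destruct (Nat.lt_ge_cases x (A k)) as [L|L].
      + rewrite (sg_id _ _ (A k) x (HPa k) L) in E. lia.
      + assert (blk x = k). { apply (block_uniq A HA x); [apply Hblk|lia]. }
        exists x. rewrite Hh, H. auto. }
  assert (hiff : forall k x, x < A k <-> h x < A k).
  { intros k x. rewrite (block_lt A HA x (blk x) k (Hblk x)).
    rewrite (block_lt A HA (h x) (blk (h x)) k (Hblk (h x))). rewrite Hbh. tauto. }
  destruct hperm as [hinj hsurj].
  set (hinv := fun y => proj1_sig (constructive_indefinite_description _ (hsurj y))).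
  assert (Hhi : forall y, h (hinv y) = y).
  { intros y. unfold hinv. destruct (constructive_indefinite_description _ _); auto. }
  assert (Hih : forall x, hinv (h x) = x) by (intros; apply hinj; auto).
  set (g := fun y => f (hinv y)).
  assert (gperm : is_perm g).
  { split.
    - intros x y E. unfold g in E. apply finj in E. rewrite <- (Hhi x), <- (Hhi y), E. auto.
    - intros y. exists (h (finv y)). unfold g. rewrite Hih. auto. }
  assert (giff : forall k x, h x < B k <-> f x < B k).
  { intros k x. pose proof (Hhb x). pose proof (Hblk x).
    set (j := blk x) in *.
    destruct (Nat.lt_total j k) as [L|[L|L]].
    - pose proof (a_mono A HA (S j) k L). pose proof (HAB k).
      split; intros; [apply C1; lia|lia].
    - subst k. rewrite Hh. fold j. rewrite <- HP at 1.
      rewrite (sg_P (P j) (A (S j)) x ltac:(lia)). unfold P. apply Nat.ltb_lt.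
    - pose proof (a_mono A HA (S k) j L). pose proof (HBA k). split; intros; [lia|].
      exfalso. pose proof (C2 k (f x) H4) as C. rewrite Hff in C. lia. }
  exists g, h. split; [|split].
  - split; auto. intros i. exists (B i). split; [pose proof (HAB i); pose proof (Hk i); lia|].
    apply carries_of; auto. intros y. rewrite <- (Hhi y) at 1. rewrite giff. unfold g. tauto.
  - split; [split; auto|]. intros i. exists (A (S i)). split; [pose proof (HA i); pose proof (Hk i); lia|].
    apply carries_of; [split; auto|]. apply hiff.
  - intros x. unfold g. rewrite Hih. auto.
Qed.
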